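(* Let $B_1,\dots,B_D$ be resonator blocks and define $\Sigma=\bigcup_{\chi_+\in\{1,\dots,D\}^{\mathbb{Z}_{\ge0}}}\big(\sigma(\mathcal{J}_+(\chi_+))\cup\sigma(\mathcal{J}_-(\chi_+))\big)$. Let $M\in\mathbb{N}$ and $\chi_M\in\{1,\dots,D\}^M$, and let $V,C\in\mathbb{R}^{N\times N}$ be the material and capacitance matrices of the finite resonator array determined by $\chi_M$. Then $\sigma(VC)\subset\Sigma$.
   Context: A resonator block $B_d$ is a finite sequence of $\mathrm{len}(B_d)\ge1$ triples $(v_k,\ell_k,s_k)$ of positive reals (wave speed, length, spacing to the next resonator). The finite array of $\chi_M$ is the concatenation $B_{\chi_M(1)},\dots,B_{\chi_M(M)}$, giving $N$ resonators with parameters $(v_i,\ell_i,s_i)_{i=1}^N$. Then $V=\mathrm{diag}(v_1^2/\ell_1,\dots,v_N^2/\ell_N)$ and $C$ is the symmetric tridiagonal matrix with $C_{i,i+1}=C_{i+1,i}=-1/s_i$ ($1\le i\le N-1$), $C_{11}=1/s_1$, $C_{NN}=1/s_{N-1}$, $C_{ii}=1/s_{i-1}+1/s_i$ for $2\le i\le N-1$. For a resonator sequence set $a^{(i)}=-\frac{v_iv_{i+1}}{s_i\sqrt{\ell_i\ell_{i+1}}}$, $b^{(i)}=\frac{v_i^2}{\ell_i}(\frac1{s_{i-1}}+\frac1{s_i})$. $\mathcal{J}_+(\chi_+)$: resonators indexed by $i\ge0$ obtained by concatenating $B_{\chi_+(0)},B_{\chi_+(1)},\dots$; operator on $\ell^2(\mathbb{Z}_{\ge0})$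 with $(\mathcal{J}_+\mathbf{v})^{(i)}=a^{(i-1)}\mathbf{v}^{(i-1)}+a^{(i)}\mathbf{v}^{(i+1)}+b^{(i)}\mathbf{v}^{(i)}$ for $i\ge1$ and $(\mathcal{J}_+\mathbf{v})^{(0)}=a^{(0)}\mathbf{v}^{(1)}+\frac{v_0^2}{\ell_0s_0}\mathbf{v}^{(0)}$. $\mathcal{J}_-(\chi_+)$: resonators indexed by $i\le-1$ obtained by placing blocks $\dots,B_{\chi_+(1)},B_{\chi_+(0)}$ left to right (each block internally in original order, last resonator of $B_{\chi_+(0)}$ at index $-1$); operator on $\ell^2(\mathbb{Z}_{<0})$ given by the bulk formula for $i\le-2$ and $(\mathcal{J}_-\mathbf{v})^{(-1)}=a^{(-2)}\mathbf{v}^{(-2)}+\frac{v_{-1}^2}{\ell_{-1}s_{-2}}\mathbf{v}^{(-1)}$. *)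

(* Defs.v *)
From Stdlib Require Import Reals List ZArith Arith Lia Lra.
From Coquelicot Require Import Coquelicot.
Open Scope R_scope.

(* A resonator: ((wave speed v, length l), spacing s to the next resonator). *)
Definition res : Type := (R * R * R)%type.
Definition rv (r : res) : R := fst (fst r).
Definition rl (r : res) : R := snd (fst r).
Definition rs (r : res) : R := snd r.
Definition res0 : res := ((1, 1), 1).   (* dummy default, never reached *)

Definition pos_res (r : res) : Prop := 0 < rv r /\ 0 < rl r /\ 0 < rs r.

Definition valid_blocks (D : nat) (B : nat -> list res) : Prop :=
  forall d, (1 <= d <= D)%nat -> B d <> nil /\ List.Forall pos_res (B d).

Definition finite_array (B : nat -> list res) (chiM : list nat) : list res :=
  flat_map B chiM.

Definition resF (arr : list res) (i : nat) : res := nth (i - 1) arr res0.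

Definition Vmat (arr : list res) (i j : nat) : R :=
  if Nat.eqb i j then rv (resF arr i) ^ 2 / rl (resF arr i) else 0.

Definition Cmat (arr : list res) (i j : nat) : R :=
  let N := length arr in
  let s k := rs (resF arr k) in
  if Nat.eqb i j then
    (if Nat.eqb i 1 then 1 / s 1%nat
     else if Nat.eqb i N then 1 / s (N - 1)%nat
     else 1 / s (i - 1)%nat + 1 / s i)
  else if Nat.eqb j (S i) then - (1 / s i)
  else if Nat.eqb i (S j) then - (1 / s j)
  else 0.

Definition VCmat (arr : list res) (i j : nat) : R :=
  sum_n_m (fun k => Vmat arr i k * Cmat arr k j) 1 (length arr).

Definition eigenvalue_VC (arr : list res) (z : C) : Prop :=
  let N := length arr in
  exists x : nat -> C,
    (exists i, (1 <= i <= N)%nat /\ x i <> 0%C) /\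
    forall i, (1 <= i <= N)%nat ->
      sum_n_m (fun j => Cmult (RtoC (VCmat arr i j)) (x j)) 1 N = Cmult z (x i).

Definition coef_a (r : Z -> res) (i : Z) : R :=
  - (rv (r i) * rv (r (i + 1)%Z)) / (rs (r i) * sqrt (rl (r i) * rl (r (i + 1)%Z))).
Definition coef_b (r : Z -> res) (i : Z) : R :=
  rv (r i) ^ 2 / rl (r i) * (1 / rs (r (i - 1)%Z) + 1 / rs (r i)).

Definition plus_res (B : nat -> list res) (chi : nat -> nat) (i : Z) : res :=
  let n := Z.to_nat i in
  nth n (flat_map (fun j => B (chi j)) (seq 0 (S n))) res0.

(* Resonators of J_-(chi): ..., B_{chi 1}, B_{chi 0} left to right, last
   resonator of B_{chi 0} at index -1; index i <= -1. *)
Definition minus_res (B : nat -> list res) (chi : nat -> nat) (i : Z) : res :=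
  let n := Z.to_nat (- i - 1) in
  nth n (flat_map (fun j => rev (B (chi j))) (seq 0 (S n))) res0.

Definition Jplus (B : nat -> list res) (chi : nat -> nat) (x : nat -> C) (n : nat) : C :=
  let r := plus_res B chi in
  let i := Z.of_nat n in
  match n with
  | O => Cplus (Cmult (RtoC (coef_a r 0%Z)) (x 1%nat))
               (Cmult (RtoC (rv (r 0%Z) ^ 2 / (rl (r 0%Z) * rs (r 0%Z)))) (x 0%nat))
  | S m => Cplus (Cplus (Cmult (RtoC (coef_a r (i - 1)%Z)) (x m))
                        (Cmult (RtoC (coef_a r i)) (x (S n))))
                 (Cmult (RtoC (coef_b r i)) (x n))
  end.

(* J_- acting on sequences x : nat -> C, where x n = v^{(-(n+1))}
   (so index i = -(n+1); i-1 <-> n+1, i+1 <-> n-1). *)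
Definition Jminus (B : nat -> list res) (chi : nat -> nat) (x : nat -> C) (n : nat) : C :=
  let r := minus_res B chi in
  let i := (- Z.of_nat n - 1)%Z in
  match n with
  | O => Cplus (Cmult (RtoC (coef_a r (-2)%Z)) (x 1%nat))
               (Cmult (RtoC (rv (r (-1)%Z) ^ 2 / (rl (r (-1)%Z) * rs (r (-2)%Z)))) (x 0%nat))
  | S m => Cplus (Cplus (Cmult (RtoC (coef_a r (i - 1)%Z)) (x (S n)))
                        (Cmult (RtoC (coef_a r i)) (x m)))
                 (Cmult (RtoC (coef_b r i)) (x n))
  end.

Definition l2 (x : nat -> C) : Prop := ex_series (fun n => Cmod (x n) ^ 2).
Definition l2norm (x : nat -> C) : R := sqrt (Series (fun n => Cmod (x n) ^ 2)).

Definition resolvent (J : (nat -> C) -> (nat -> C)) (z : C) : Prop :=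
  exists K : R,
    (forall x, l2 x -> (forall n, Cminus (J x n) (Cmult z (x n)) = 0%C) ->
               forall n, x n = 0%C) /\
    (forall y, l2 y -> exists x, l2 x /\
        (forall n, Cminus (J x n) (Cmult z (x n)) = y n) /\
        l2norm x <= K * l2norm y).

Definition spectrum (J : (nat -> C) -> (nat -> C)) (z : C) : Prop :=
  ~ resolvent J z.

Definition Sigma (D : nat) (B : nat -> list res) (z : C) : Prop :=
  exists chi : nat -> nat,
    (forall n, (1 <= chi n <= D)%nat) /\
    (spectrum (Jplus B chi) z \/ spectrum (Jminus B chi) z).

(* Main.v *)
Require Import Defs.
From Stdlib Require Import Reals List ZArith Arith Lra Lia.
From Coquelicot Require Import Coquelicot.
Open Scope R_scope.

Fixpoint fsum (f : nat -> R) (n : nat) : R :=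
  match n with O => 0 | S m => fsum f m + f m end.

Lemma fsum_ext f g n : (forall k, (k < n)%nat -> f k = g k) -> fsum f n = fsum g n.
Proof. induction n; intros H; simpl; auto. rewrite IHn by (intros; apply H; lia). rewrite H by lia; auto. Qed.

Lemma fsum_nonneg f n : (forall k, 0 <= f k) -> 0 <= fsum f n.
Proof. intros H; induction n; simpl; [lra|]. specialize (H n); lra. Qed.

Lemma fsum_sumf f n : fsum f (S n) = sum_f_R0 f n.
Proof. induction n; simpl; [lra|]. simpl in IHn. rewrite <- IHn. simpl. lra. Qed.

Lemma is_series_zero : is_series (fun _ : nat => 0) 0.
Proof.
  assert (H := is_series_scal_r 0 (fun n => (1/2)^n) _ (Series_correct _ (ex_series_geom (1/2) ltac:(rewrite Rabs_pos_eq; lra)))).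
  rewrite Rmult_0_r in H. eapply is_series_ext; [|exact H]. intros; simpl; ring.
Qed.

Lemma fin_series a n : (forall k, (n <= k)%nat -> a k = 0) -> ex_series a /\ Series a = fsum a n.
Proof.
  intros H.
  assert (Ht : forall k, a (n + k)%nat = 0) by (intros; apply H; lia).
  assert (E : ex_series a).
  { apply (ex_series_incr_n a n). exists 0. eapply is_series_ext; [|exact is_series_zero].
    intros; simpl; rewrite Ht; auto. }
  split; auto.
  destruct n.
  - simpl. rewrite (Series_ext _ (fun _ => 0)) by (intros; apply H; lia).
    apply is_series_unique, is_series_zero.
  - rewrite (Series_incr_n a (S n)) by (auto; lia). simpl Init.Nat.pred.
    rewrite (Series_ext _ (fun _ => 0)) by (intros; apply Ht).
    rewrite (is_series_unique _ 0 is_series_zero). rewrite fsum_sumf; lra.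
Qed.

Lemma weyl (J : (nat -> C) -> (nat -> C)) (z : C) :
  (forall x w n, J (fun k => Cminus (x k) (w k)) n = Cminus (J x n) (J w n)) ->
  (forall eps, 0 < eps -> exists (w : nat -> C) (L : nat),
      (forall n, (L <= n)%nat -> w n = 0%C) /\
      (forall n, (S L <= n)%nat -> Cminus (J w n) (Cmult z (w n)) = 0%C) /\
      0 < fsum (fun n => Cmod (w n) ^ 2) L /\
      fsum (fun n => Cmod (Cminus (J w n) (Cmult z (w n))) ^ 2) (S L)
        <= eps * fsum (fun n => Cmod (w n) ^ 2) L) ->
  spectrum J z.
Proof.
  intros Hlin Happ [K [Hinj Hsurj]].
  destruct (Happ (/ (2 * (K^2 + 1)))) as [w [L [Hw0 [Hr0 [Hpos Hle]]]]].
  { apply Rinv_0_lt_compat. nra. }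
  set (r := fun n => Cminus (J w n) (Cmult z (w n))) in *.
  destruct (fin_series (fun n => Cmod (w n) ^ 2) L) as [Ew Sw].
  { intros k Hk; rewrite Hw0 by auto; rewrite Cmod_0; ring. }
  destruct (fin_series (fun n => Cmod (r n) ^ 2) (S L)) as [Er Sr].
  { intros k Hk; unfold r; rewrite Hr0 by auto; rewrite Cmod_0; ring. }
  destruct (Hsurj r Er) as [x [Hx [Hxr Hb]]].
  assert (Hxw : forall n, x n = w n).
  { assert (Hl : l2 (fun k => Cminus (x k) (w k))).
    { unfold l2. apply (ex_series_incr_n _ L). apply (ex_series_incr_n _ L) in Hx.
      eapply ex_series_ext; [|exact Hx]. intros n; simpl.
      rewrite (Hw0 (L+n)%nat) by lia. unfold Cminus. rewrite Copp_0, Cplus_0_r. auto. }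
    intros n.
    assert (H := Hinj _ Hl). 
    assert (H2 : forall n, Cminus (J (fun k => Cminus (x k) (w k)) n)
                   (Cmult z (Cminus (x n) (w n))) = 0%C).
    { intros m. rewrite Hlin. specialize (Hxr m). unfold r in Hxr.
      transitivity (Cminus (Cminus (J x m) (Cmult z (x m))) (Cminus (J w m) (Cmult z (w m)))).
      { ring. } rewrite Hxr. ring. }
    specialize (H H2 n). apply (f_equal (fun t => Cplus t (w n))) in H.
    rewrite Cplus_0_l in H. rewrite <- H. ring. }
  unfold l2norm in Hb.
  rewrite (Series_ext _ (fun n => Cmod (w n) ^ 2)) in Hb by (intros; rewrite Hxw; auto).
  rewrite Sw, Sr in Hb.
  set (A := fsum (fun n => Cmod (w n) ^ 2) L) in *.
  set (Bq := fsum (fun n => Cmod (r n) ^ 2) (S L)) in *.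
  assert (HB0 : 0 <= Bq) by (apply fsum_nonneg; intros; apply pow2_ge_0).
  assert (sA := sqrt_lt_R0 A Hpos).
  assert (sB := sqrt_pos Bq).
  assert (HK : 0 < K).
  { destruct (Rle_or_lt K 0) as [h|h]; auto.
    assert (K * sqrt Bq <= 0) by (rewrite <- (Rmult_0_l (sqrt Bq)); apply Rmult_le_compat_r; auto). lra. }
  assert (Hsq : A <= K^2 * Bq).
  { rewrite <- (sqrt_sqrt A) by lra. rewrite <- (sqrt_sqrt Bq) by lra.
    apply Rle_trans with ((K*sqrt Bq)*(K*sqrt Bq)); [apply Rmult_le_compat; lra | right; ring]. }
  assert (Hinv : K^2 * / (2 * (K ^ 2 + 1)) < 1).
  { apply (Rmult_lt_reg_r (2 * (K^2+1))). nra. rewrite Rmult_assoc, Rinv_l by nra. nra. }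
  assert (K^2 * Bq <= K^2 * (/ (2 * (K ^ 2 + 1)) * A)) by (apply Rmult_le_compat_l; [apply pow2_ge_0 | exact Hle]).
  nra.
Qed.

Lemma RtoC_nz (x : R) : x <> 0 -> RtoC x <> 0%C.
Proof. intros H E. apply H. apply (f_equal fst) in E. simpl in E. auto. Qed.

Ltac cpush := unfold Rdiv; repeat (rewrite ?RtoC_mult, ?RtoC_opp, ?RtoC_plus, ?RtoC_minus, ?RtoC_pow).

Definition lft (g : nat -> R) (y : nat -> C) (i : nat) : C :=
  if Nat.eqb i 0 then 0%C else ((y i - y (pred i)) / RtoC (g (pred i)))%C.
Definition rgt (g : nat -> R) (y : nat -> C) (L i : nat) : C :=
  if Nat.eqb i (pred L) then 0%C else ((y i - y (S i)) / RtoC (g i))%C.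
Definition NN (e g : nat -> R) (L : nat) (y : nat -> C) (z : C) : Prop :=
  forall i, (i < L)%nat -> (RtoC (e i ^ 2) * (lft g y i + rgt g y L i))%C = (z * y i)%C.

Definition Jform (e g : nat -> R) (J : (nat -> C) -> (nat -> C)) : Prop :=
  (forall x, J x 0%nat = (RtoC (-(e 0%nat * e 1%nat) / g 0%nat) * x 1%nat
                          + RtoC (e 0%nat ^ 2 / g 0%nat) * x 0%nat)%C) /\
  (forall x m, J x (S m) = (RtoC (-(e m * e (S m)) / g m) * x m
                            + RtoC (-(e (S m) * e (S (S m))) / g (S m)) * x (S (S m))
                            + RtoC (e (S m) ^ 2 * (1 / g m + 1 / g (S m))) * x (S m))%C).

Lemma Jform_lin e g J : Jform e g J ->
  forall x w n, J (fun k => Cminus (x k) (w k)) n = Cminus (J x n) (J w n).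
Proof. intros [H0 HS] x w [|m]; [rewrite !H0 | rewrite !HS]; ring. Qed.

Lemma Jform_loc e g J : Jform e g J ->
  forall x x' n, (forall j, (j <= S n)%nat -> x j = x' j) -> J x n = J x' n.
Proof. intros [H0 HS] x x' [|m] H; [rewrite !H0 | rewrite !HS]; rewrite !H by lia; auto. Qed.

Lemma alg_row0 (e0 e1 g0 : R) (Y0 Y1 z : C) : e0 <> 0 -> e1 <> 0 -> g0 <> 0 ->
  (RtoC (e0 ^ 2) * (0 + (Y0 - Y1) / RtoC g0))%C = (z * Y0)%C ->
  (RtoC (-(e0 * e1) / g0) * (Y1 * RtoC (/ e1)) + RtoC (e0 ^ 2 / g0) * (Y0 * RtoC (/ e0)))%C
  = (z * (Y0 * RtoC (/ e0)))%C.
Proof.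
  intros h0 h1 h2 H.
  assert (n0 := RtoC_nz _ h0). assert (n1 := RtoC_nz _ h1). assert (n2 := RtoC_nz _ h2).
  cpush. rewrite !RtoC_inv by auto.
  replace (z * (Y0 * / RtoC e0))%C with ((z * Y0) * / RtoC e0)%C by ring.
  rewrite <- H. cpush. field. auto.
Qed.

Lemma alg_rowS (em e1 e2 gm g1 : R) (Ym Y1 Y2 z : C) : em <> 0 -> e1 <> 0 -> e2 <> 0 -> gm <> 0 -> g1 <> 0 ->
  (RtoC (e1 ^ 2) * ((Y1 - Ym) / RtoC gm + (Y1 - Y2) / RtoC g1))%C = (z * Y1)%C ->
  (RtoC (-(em * e1) / gm) * (Ym * RtoC (/ em))
   + RtoC (-(e1 * e2) / g1) * (Y2 * RtoC (/ e2))
   + RtoC (e1 ^ 2 * (1 / gm + 1 / g1)) * (Y1 * RtoC (/ e1)))%C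
  = (z * (Y1 * RtoC (/ e1)))%C.
Proof.
  intros h0 h1 h2 h3 h4 H.
  assert (n0 := RtoC_nz _ h0). assert (n1 := RtoC_nz _ h1). assert (n2 := RtoC_nz _ h2).
  assert (n3 := RtoC_nz _ h3). assert (n4 := RtoC_nz _ h4).
  cpush. rewrite !RtoC_inv by auto.
  replace (z * (Y1 * / RtoC e1))%C with ((z * Y1) * / RtoC e1)%C by ring.
  rewrite <- H. cpush. try rewrite RtoC_inv by auto. field. auto.
Qed.

Lemma fsum_add f a b : fsum f (a + b) = fsum f a + fsum (fun i => f (a + i)%nat) b.
Proof. induction b; simpl. rewrite Nat.add_0_r; lra. rewrite Nat.add_succ_r. simpl. rewrite IHb. lra. Qed.

Lemma fsum_ge_term f n k : (forall j, 0 <= f j) -> (k < n)%nat -> f k <= fsum f n.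
Proof.
  intros H; induction n; intros Hk; [lia|]. simpl.
  destruct (Nat.eq_dec k n). subst. assert (0 <= fsum f n) by (apply fsum_nonneg; auto). lra.
  assert (f k <= fsum f n) by (apply IHn; lia). specialize (H n). lra.
Qed.

Lemma fsum_block f K L : (forall j, 0 <= f j) -> (1 <= L)%nat ->
  fsum (fun k => f (k * L)%nat) K <= fsum f (K * L).
Proof.
  intros H HL; induction K; simpl; [lra|].
  replace (L + K * L)%nat with (K * L + L)%nat by lia. rewrite fsum_add.
  assert (f (K * L + 0)%nat <= fsum (fun i => f (K * L + i)%nat) L) by (apply (fsum_ge_term (fun i => f (K * L + i)%nat)); auto; lia).
  rewrite Nat.add_0_r in H0. lra.
Qed.

Lemma fsum_lower f K m : (forall k, (k < K)%nat -> m <= f k) -> INR K * m <= fsum f K.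
Proof.
  induction K; intros H; [simpl; lra|]. rewrite S_INR; simpl.
  assert (INR K * m <= fsum f K) by (apply IHK; intros; apply H; lia).
  specialize (H K ltac:(lia)). lra.
Qed.

Lemma period_gen (e : nat -> R) L : (forall n, e (n + L)%nat = e n) -> forall k i, e (k * L + i)%nat = e i.
Proof.
  intros H k; induction k; intros i; simpl; auto.
  replace (L + k * L + i)%nat with ((k * L + i) + L)%nat by lia. rewrite H; auto.
Qed.

Lemma chain (e g : nat -> R) (L : nat) (y : nat -> C) (z : C) J :
  (2 <= L)%nat -> (forall n, 0 < e n) -> (forall n, 0 < g n) ->
  (forall n, e (n + L)%nat = e n) -> (forall n, g (n + L)%nat = g n) ->
  NN e g L y z -> y 0%nat <> 0%C -> Cmod (y (pred L)) <= Cmod (y 0%nat) ->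
  Jform e g J -> spectrum J z.
Proof.
  intros HL He Hg Hpe Hpg HN Hy0 Hcm HJ.
  assert (HL0 : L <> 0%nat) by lia.
  assert (pe := period_gen e L Hpe). assert (pg := period_gen g L Hpg).
  set (c := (y (pred L) / y 0%nat)%C).
  assert (Hc : (c * y 0%nat)%C = y (pred L)) by (unfold c; field; auto).
  set (Y := fun n => (c ^ (n / L) * y (n mod L))%C).
  assert (Yat : forall k i, (i < L)%nat -> Y (k * L + i)%nat = (c ^ k * y i)%C).
  { intros k i Hi. unfold Y. rewrite Nat.div_add_l by auto. rewrite Nat.div_small by auto.
    rewrite Nat.add_0_r. rewrite Nat.add_comm, Nat.Div0.mod_add, Nat.mod_small by auto. auto. }
  assert (Ywrap : forall k, Y (k * L + L)%nat = (c ^ k * y (pred L))%C).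
  { intros k. replace (k * L + L)%nat with (S k * L + 0)%nat by lia. rewrite Yat by lia.
    simpl. rewrite <- Hc. ring. }
  assert (ICE : forall n, (RtoC (e n ^ 2) * (lft g Y n + (Y n - Y (S n)) / RtoC (g n)))%C = (z * Y n)%C).
  { intros n. pose proof (Nat.div_mod n L HL0) as Hn.
    set (k := (n / L)%nat) in *. set (i := (n mod L)%nat) in *.
    assert (Hi : (i < L)%nat) by (apply Nat.mod_upper_bound; auto).
    assert (En : n = (k * L + i)%nat) by lia. clearbody k i. clear Hn. subst n.
    rewrite pe, pg, Yat by auto.
    assert (Hl : lft g Y (k * L + i) = (c ^ k * lft g y i)%C).
    { unfold lft. destruct i as [|i'].
      - destruct k as [|k']. simpl. ring.
        replace (S k' * L + 0)%nat with (k' * L + L)%nat by lia. rewrite Ywrap.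
        replace (Nat.eqb (k' * L + L) 0) with false by (symmetry; apply Nat.eqb_neq; lia).
        replace (pred (k' * L + L)) with (k' * L + pred L)%nat by lia.
        rewrite Yat by lia. rewrite Nat.eqb_refl. unfold Cminus; rewrite Cplus_opp_r. unfold Cdiv. ring.
      - replace (Nat.eqb (k * L + S i') 0) with false by (symmetry; apply Nat.eqb_neq; lia).
        replace (pred (k * L + S i')) with (k * L + i')%nat by lia.
        rewrite Yat, pg by lia. simpl. rewrite Yat by lia. field. apply RtoC_nz. specialize (Hg i'). lra. }
    assert (Hr : ((c ^ k * y i - Y (S (k * L + i))) / RtoC (g i))%C = (c ^ k * rgt g y L i)%C).
    { unfold rgt. destruct (Nat.eq_dec i (pred L)) as [E|E].
      - rewrite (proj2 (Nat.eqb_eq _ _) E).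
        replace (S (k * L + i)) with (k * L + L)%nat by lia. rewrite Ywrap. subst i.
        unfold Cminus; rewrite Cplus_opp_r. unfold Cdiv. ring.
      - rewrite (proj2 (Nat.eqb_neq _ _) E). replace (S (k * L + i)) with (k * L + S i)%nat by lia.
        rewrite Yat by lia. field. apply RtoC_nz. specialize (Hg i). lra. }
    rewrite Hl, Hr. specialize (HN i Hi).
    transitivity (c ^ k * (RtoC (e i ^ 2) * (lft g y i + rgt g y L i)))%C; [ring|].
    rewrite HN. ring. }
  set (Yt := fun n => (Y n * RtoC (/ e n))%C).
  assert (JYt : forall n, J Yt n = (z * Yt n)%C).
  { destruct HJ as [H0 HS]. intros [|m].
    - rewrite H0. unfold Yt. apply alg_row0; try (apply Rgt_not_eq, He).
      apply Rgt_not_eq, Hg. specialize (ICE 0%nat). unfold lft in ICE. simpl in ICE. exact ICE.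
    - rewrite HS. unfold Yt. apply alg_rowS; try (apply Rgt_not_eq, He); try (apply Rgt_not_eq, Hg).
      specialize (ICE (S m)). unfold lft in ICE. simpl in ICE. exact ICE. }
  apply (weyl J z (Jform_lin e g J HJ)).
  intros eps Heps.
  set (rho := Cmod c).
  assert (Hrho0 : 0 <= rho) by apply Cmod_ge_0.
  assert (Hrho1 : rho <= 1).
  { unfold rho, c. rewrite Cmod_div by auto. apply Cmod_gt_0 in Hy0.
    apply (Rmult_le_reg_r (Cmod (y 0%nat))); auto. unfold Rdiv. rewrite Rmult_assoc, Rinv_l by lra. lra. }
  set (S0 := (Cmod (y 0%nat) / e 0%nat) ^ 2).
  assert (HS0 : 0 < S0).
  { unfold S0. apply pow_lt. apply Rdiv_lt_0_compat. apply Cmod_gt_0; auto. apply He. }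
  set (A := (e (pred L) / g (pred L)) ^ 2 * Cmod (y 0%nat) ^ 2 + (e 0%nat / g (pred L)) ^ 2 * Cmod (y (pred L)) ^ 2).
  assert (HA : 0 <= A) by (unfold A; assert (0 <= (e (pred L) / g (pred L)) ^ 2 * Cmod (y 0%nat) ^ 2) by (apply Rmult_le_pos; apply pow2_ge_0);
     assert (0 <= (e 0%nat / g (pred L)) ^ 2 * Cmod (y (pred L)) ^ 2) by (apply Rmult_le_pos; apply pow2_ge_0); lra).
  destruct (INR_unbounded (A / (eps * S0))) as [K0 HK0].
  set (K := S K0).
  assert (HKA : A <= eps * (INR K * S0)).
  { unfold K. rewrite S_INR.
    assert (A / (eps * S0) * (eps * S0) = A) by (field; lra).
    assert (0 < eps * S0) by (apply Rmult_lt_0_compat; lra).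
    assert (A / (eps * S0) * (eps * S0) <= (INR K0 + 1) * (eps * S0)) by (apply Rmult_le_compat_r; lra).
    lra. }
  set (w := fun n => if Nat.ltb n (K * L) then Yt n else 0%C).
  assert (CYt : forall k i, (i < L)%nat -> Cmod (Yt (k * L + i)%nat) = rho ^ k * Cmod (y i) * / e i).
  { intros k i Hi. unfold Yt. rewrite Yat, pe by auto. rewrite !Cmod_mult, Cmod_pow, Cmod_R.
    rewrite Rabs_pos_eq. auto. apply Rlt_le, Rinv_0_lt_compat, He. }
  assert (EPx : exists m, (K * L)%nat = S (S m)) by (exists (K * L - 2)%nat; lia).
  destruct EPx as [m0 EP].
  assert (HJ' := HJ). destruct HJ as [HJ0 HJS].
  assert (Hw : forall n, (n < S (S m0))%nat -> w n = Yt n).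
  { intros n Hn. unfold w. rewrite EP. replace (Nat.ltb n (S (S m0))) with true; auto. symmetry; apply Nat.ltb_lt; auto. }
  assert (Hw0 : forall n, (S (S m0) <= n)%nat -> w n = 0%C).
  { intros n Hn. unfold w. rewrite EP. replace (Nat.ltb n (S (S m0))) with false; auto. symmetry; apply Nat.ltb_ge; auto. }
  exists w, (S (S m0)).
  assert (Eq1 : S m0 = ((K - 1) * L + pred L)%nat).
  { unfold K in *. replace (S K0 - 1)%nat with K0 by lia. simpl in EP. lia. }
  assert (Eq2 : S (S m0) = (K * L + 0)%nat) by lia.
  assert (Hpos : forall n, 0 <= Cmod (w n) ^ 2) by (intros; apply pow2_ge_0).
  set (q := rho ^ (K - 1)).
  assert (Hq0 : 0 <= q) by (apply pow_le; auto).
  assert (Hqk : forall k, (k < K)%nat -> q <= rho ^ k).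
  { intros k Hk. unfold q. replace (K - 1)%nat with (k + (K - 1 - k))%nat by lia. rewrite pow_add.
    assert (rho ^ (K - 1 - k) <= 1) by (rewrite <- (pow1 (K - 1 - k)); apply pow_incr; lra).
    assert (0 <= rho ^ k) by (apply pow_le; auto). nra. }
  assert (HrK : rho ^ K <= q).
  { assert (G : forall n, rho ^ S n <= rho ^ n).
    { intros n. simpl. assert (0 <= rho ^ n) by (apply pow_le; auto). nra. }
    unfold q. replace K with (S (K - 1)) at 1 by (unfold K; lia). apply G. }
  assert (Hnorm : INR K * (q ^ 2 * S0) <= fsum (fun n => Cmod (w n) ^ 2) (S (S m0))).
  { rewrite <- EP. eapply Rle_trans; [|apply fsum_block; auto; lia].
    apply fsum_lower. intros k Hk. rewrite Hw by (rewrite EP in *; nia).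
    replace (k * L)%nat with (k * L + 0)%nat by lia. rewrite CYt by lia. unfold S0.
    assert (q <= rho ^ k) by auto. assert (0 <= Cmod (y 0%nat) * / e 0%nat).
    { apply Rmult_le_pos. apply Cmod_ge_0. apply Rlt_le, Rinv_0_lt_compat, He. }
    unfold Rdiv. replace (rho ^ k * Cmod (y 0%nat) * / e 0%nat) with (rho ^ k * (Cmod (y 0%nat) * / e 0%nat)) by ring.
    assert (q^2 <= (rho^k)^2) by (apply pow_incr; lra).
    replace ((rho ^ k * (Cmod (y 0%nat) * / e 0%nat)) ^ 2) with ((rho^k)^2 * (Cmod (y 0%nat) * / e 0%nat) ^ 2) by ring.
    apply Rmult_le_compat_r; auto. apply pow2_ge_0. }
  split; [exact Hw0|]. split.
  { intros [|n] Hn; [lia|]. rewrite HJS. rewrite !Hw0 by lia. ring. }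
  split.
  { eapply Rlt_le_trans; [|apply (fsum_ge_term _ _ 0%nat); auto; lia].
    cbv beta. rewrite Hw by lia. replace 0%nat with (0 * L + 0)%nat at 1 by lia. rewrite CYt by lia.
    apply pow_lt. simpl pow. rewrite Rmult_1_l. apply Rmult_lt_0_compat.
    apply Cmod_gt_0; auto. apply Rinv_0_lt_compat, He. }
  set (Rs := fun n => Cmod (Cminus (J w n) (Cmult z (w n))) ^ 2).
  change (fsum Rs (S (S (S m0)))) with (fsum Rs (S m0) + Rs (S m0) + Rs (S (S m0))).
  assert (Z0 : fsum Rs (S m0) = 0).
  { rewrite (fsum_ext _ (fun _ => 0)). clear. induction (S m0); simpl; lra.
    intros k Hk. unfold Rs. rewrite (Jform_loc e g J HJ' w Yt) by (intros; apply Hw; lia).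
    rewrite JYt, Hw by lia. unfold Cminus. rewrite Cplus_opp_r, Cmod_0. ring. }
  assert (R1 : Cminus (J w (S m0)) (Cmult z (w (S m0)))
               = (- RtoC (-(e (S m0) * e (S (S m0))) / g (S m0)) * Yt (S (S m0)))%C).
  { rewrite HJS. rewrite (Hw m0), (Hw (S m0)), (Hw0 (S (S m0))) by lia.
    pose proof (JYt (S m0)) as H. rewrite HJS in H. rewrite <- H. ring. }
  assert (R2 : Cminus (J w (S (S m0))) (Cmult z (w (S (S m0))))
               = (RtoC (-(e (S m0) * e (S (S m0))) / g (S m0)) * Yt (S m0))%C).
  { rewrite HJS. rewrite (Hw (S m0)), (Hw0 (S (S m0))), (Hw0 (S (S (S m0)))) by lia. ring. }
  assert (E1 : e (S m0) = e (pred L)) by (rewrite Eq1, pe; auto).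
  assert (E2 : e (S (S m0)) = e 0%nat) by (rewrite Eq2, pe; auto).
  assert (G1 : g (S m0) = g (pred L)) by (rewrite Eq1, pg; auto).
  assert (CY1 : Cmod (Yt (S (S m0))) = rho ^ K * Cmod (y 0%nat) * / e 0%nat) by (rewrite Eq2, CYt; auto; lia).
  assert (CY0 : Cmod (Yt (S m0)) = q * Cmod (y (pred L)) * / e (pred L)) by (rewrite Eq1, CYt; auto; lia).
  assert (Ha : Rabs (-(e (S m0) * e (S (S m0))) / g (S m0)) = e (pred L) * e 0%nat / g (pred L)).
  { rewrite E1, E2, G1. replace (-(e (pred L) * e 0%nat) / g (pred L)) with (-(e (pred L) * e 0%nat / g (pred L))) by (unfold Rdiv; ring).
    rewrite Rabs_Ropp, Rabs_pos_eq; auto. apply Rlt_le. apply Rdiv_lt_0_compat; [apply Rmult_lt_0_compat|]; auto. }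
  assert (he0 : e 0%nat <> 0) by (apply Rgt_not_eq, He).
  assert (heL : e (pred L) <> 0) by (apply Rgt_not_eq, He).
  assert (hgL : g (pred L) <> 0) by (apply Rgt_not_eq, Hg).
  assert (HR1 : Rs (S m0) = ((e (pred L) / g (pred L)) * Cmod (y 0%nat)) ^ 2 * (rho ^ K) ^ 2).
  { unfold Rs. rewrite R1, Cmod_mult, Cmod_opp, Cmod_R, Ha, CY1. field. auto. }
  assert (HR2 : Rs (S (S m0)) = (e 0%nat / g (pred L)) ^ 2 * Cmod (y (pred L)) ^ 2 * q ^ 2).
  { unfold Rs. rewrite R2, Cmod_mult, Cmod_R, Ha, CY0. field. auto. }
  rewrite Z0, HR1, HR2.
  assert (Hk2 : (rho ^ K) ^ 2 <= q ^ 2) by (apply pow_incr; split; [apply pow_le|]; auto).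
  assert (HAq : A * q ^ 2 <= eps * (INR K * S0) * q ^ 2) by (apply Rmult_le_compat_r; [apply pow2_ge_0|auto]).
  assert (0 <= ((e (pred L) / g (pred L)) * Cmod (y 0%nat)) ^ 2) by apply pow2_ge_0.
  assert (((e (pred L) / g (pred L)) * Cmod (y 0%nat)) ^ 2 * (rho ^ K) ^ 2 <= ((e (pred L) / g (pred L)) * Cmod (y 0%nat)) ^ 2 * q ^ 2)
    by (apply Rmult_le_compat_l; auto).
  assert (Aeq : A * q ^ 2 = ((e (pred L) / g (pred L)) * Cmod (y 0%nat)) ^ 2 * q ^ 2 + (e 0%nat / g (pred L)) ^ 2 * Cmod (y (pred L)) ^ 2 * q ^ 2)
    by (unfold A; ring).
  assert (eps * (INR K * S0) * q ^ 2 = eps * (INR K * (q ^ 2 * S0))) by ring.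
  assert (eps * (INR K * (q ^ 2 * S0)) <= eps * fsum (fun n => Cmod (w n) ^ 2) (S (S m0))) by (apply Rmult_le_compat_l; lra).
  lra.
Qed.

Fixpoint rep (l : list res) (K : nat) : list res :=
  match K with O => nil | S K' => rep l K' ++ l end.

Lemma rep_length l K : length (rep l K) = (K * length l)%nat.
Proof. induction K; simpl; auto. rewrite length_app, IHK. lia. Qed.

Lemma rep_nth l K n : (n < K * length l)%nat -> nth n (rep l K) res0 = nth (n mod length l) l res0.
Proof.
  induction K; intros H; simpl in *; [lia|].
  destruct (Nat.lt_ge_cases n (K * length l)) as [h|h].
  - rewrite app_nth1 by (rewrite rep_length; auto). auto.
  - rewrite app_nth2 by (rewrite rep_length; auto). rewrite rep_length.
    f_equal. assert (n = (n - K * length l) + K * length l)%nat by lia.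
    rewrite H0 at 2. rewrite Nat.Div0.mod_add. rewrite Nat.mod_small by lia. auto.
Qed.

Lemma flat_map_map_eq (F : nat -> list res) (chi : nat -> nat) l :
  flat_map (fun j => F (chi j)) l = flat_map F (map chi l).
Proof. induction l; simpl; auto. rewrite IHl; auto. Qed.

Lemma flat_map_len (f : nat -> list res) s k : (forall j, f j <> nil) -> (k <= length (flat_map f (seq s k)))%nat.
Proof.
  intros H; revert s; induction k; intros s; simpl; [lia|]. rewrite length_app.
  specialize (IHk (S s)). destruct (f s) eqn:E; [exfalso; apply (H s); auto|]. simpl. lia.
Qed.

Lemma periodic_nth (F : nat -> list res) (P : list nat) (chi : nat -> nat) n :
  P <> nil -> (forall k, chi k = nth (k mod length P) P 0%nat) -> (forall k, F (chi k) <> nil) ->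
  nth n (flat_map (fun j => F (chi j)) (seq 0 (S n))) res0
  = nth (n mod length (flat_map F P)) (flat_map F P) res0.
Proof.
  intros HP Hchi HF.
  set (M := length P). assert (HM : (1 <= M)%nat) by (unfold M; destruct P; simpl; [congruence|lia]).
  set (arr := flat_map F P).
  assert (Hblk : forall s, flat_map (fun j => F (chi j)) (seq (s * M) M) = arr).
  { intros s. rewrite flat_map_map_eq. unfold arr. f_equal.
    apply nth_ext with (d := 0%nat) (d' := 0%nat). rewrite length_map, length_seq; auto.
    intros i Hi. rewrite length_map, length_seq in Hi.
    rewrite (nth_indep _ 0%nat (chi 0%nat)) by (rewrite length_map, length_seq; auto).
    rewrite map_nth, seq_nth by auto. rewrite Hchi. fold M.
    rewrite Nat.add_comm, Nat.Div0.mod_add, Nat.mod_small by lia. auto. }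
  assert (Hrep : forall K, flat_map (fun j => F (chi j)) (seq 0 (K * M)) = rep arr K).
  { induction K; simpl; auto. replace (M + K * M)%nat with (K * M + M)%nat by lia.
    rewrite seq_app, flat_map_app, IHK. simpl. rewrite Hblk. auto. }
  assert (HL : (1 <= length arr)%nat).
  { unfold arr. destruct P as [|a P']; [congruence|]. simpl. rewrite length_app.
    specialize (HF 0%nat). rewrite Hchi, Nat.Div0.mod_0_l in HF. simpl in HF.
    destruct (F a); [congruence|]. simpl; lia. }
  assert (Hpre : nth n (flat_map (fun j => F (chi j)) (seq 0 (S n))) res0
                 = nth n (flat_map (fun j => F (chi j)) (seq 0 (S n * M))) res0).
  { replace (S n * M)%nat with (S n + (S n * M - S n))%nat by nia.
    rewrite seq_app, flat_map_app. rewrite app_nth1; auto.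
    pose proof (flat_map_len (fun j => F (chi j)) 0 (S n) HF). lia. }
  rewrite Hpre, Hrep. apply rep_nth. nia.
Qed.

Lemma flat_map_rev (B : nat -> list res) (l : list nat) :
  flat_map (fun d => rev (B d)) (rev l) = rev (flat_map B l).
Proof.
  induction l; simpl; auto. rewrite flat_map_app, IHl, rev_app_distr. simpl. rewrite app_nil_r. auto.
Qed.

Definition ee (q : res) : R := rv q / sqrt (rl q).

Lemma coef_a_eq r i : pos_res (r i) -> pos_res (r (i + 1)%Z) ->
  coef_a r i = -(ee (r i) * ee (r (i + 1)%Z)) / rs (r i).
Proof.
  intros [h1 [h2 h3]] [k1 [k2 k3]]. unfold coef_a, ee.
  rewrite sqrt_mult by lra.
  assert (0 < sqrt (rl (r i))) by (apply sqrt_lt_R0; auto).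
  assert (0 < sqrt (rl (r (i+1)%Z))) by (apply sqrt_lt_R0; auto).
  field. repeat split; lra.
Qed.

Lemma ee_sq q : pos_res q -> ee q ^ 2 = rv q ^ 2 / rl q.
Proof.
  intros [h1 [h2 h3]]. unfold ee.
  assert (0 < sqrt (rl q)) by (apply sqrt_lt_R0; auto).
  replace ((rv q / sqrt (rl q)) ^ 2) with (rv q ^ 2 / (sqrt (rl q) * sqrt (rl q))) by (field; lra).
  rewrite sqrt_sqrt; lra.
Qed.

Lemma coef_b_eq r i : pos_res (r i) ->
  coef_b r i = ee (r i) ^ 2 * (1 / rs (r (i - 1)%Z) + 1 / rs (r i)).
Proof. intros H. unfold coef_b. rewrite ee_sq; auto. Qed.

Lemma bnd_eq q s' : pos_res q -> 0 < s' -> rv q ^ 2 / (rl q * s') = ee q ^ 2 / s'.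
Proof. intros H hs. rewrite ee_sq by auto. destruct H as [h1 [h2 h3]]. field. lra. Qed.

Lemma Jplus_form B chi :
  (forall i, (0 <= i)%Z -> pos_res (plus_res B chi i)) ->
  Jform (fun n => ee (plus_res B chi (Z.of_nat n))) (fun n => rs (plus_res B chi (Z.of_nat n))) (Jplus B chi).
Proof.
  intros Hp. split.
  - intros x. unfold Jplus. cbv beta iota zeta.
    rewrite coef_a_eq by (apply Hp; lia).
    rewrite bnd_eq by (try apply Hp; try lia; apply (Hp 0%Z); lia).
    simpl Z.of_nat. reflexivity.
  - intros x m. unfold Jplus. cbv beta iota zeta.
    rewrite !coef_a_eq by (apply Hp; lia). rewrite coef_b_eq by (apply Hp; lia).
    replace (Z.of_nat (S m) - 1)%Z with (Z.of_nat m) by lia.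
    replace (Z.of_nat m + 1)%Z with (Z.of_nat (S m)) by lia.
    replace (Z.of_nat (S m) + 1)%Z with (Z.of_nat (S (S m))) by lia.
    ring.
Qed.

Lemma Jminus_form B chi :
  (forall i, (i < 0)%Z -> pos_res (minus_res B chi i)) ->
  Jform (fun n => ee (minus_res B chi (- Z.of_nat n - 1)%Z))
        (fun n => rs (minus_res B chi (- Z.of_nat (S n) - 1)%Z)) (Jminus B chi).
Proof.
  intros Hp. split.
  - intros x. unfold Jminus. cbv beta iota zeta.
    rewrite coef_a_eq by (apply Hp; lia).
    rewrite bnd_eq by (try apply Hp; try lia; apply (Hp (-2)%Z); lia).
    simpl Z.of_nat. simpl Z.add. simpl Z.opp. change (0 - 1)%Z with (-1)%Z. change (-1 - 1)%Z with (-2)%Z. rewrite (Rmult_comm (ee (minus_res B chi (-2)%Z))). reflexivity.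
  - intros x m. unfold Jminus. cbv beta iota zeta.
    rewrite !coef_a_eq by (apply Hp; lia). rewrite coef_b_eq by (apply Hp; lia).
    replace (- Z.of_nat (S m) - 1 - 1)%Z with (- Z.of_nat (S (S m)) - 1)%Z by lia.
    replace (- Z.of_nat (S (S m)) - 1 + 1)%Z with (- Z.of_nat (S m) - 1)%Z by lia.
    replace (- Z.of_nat (S m) - 1 + 1)%Z with (- Z.of_nat m - 1)%Z by lia.
    rewrite (Rmult_comm (ee (minus_res B chi (- Z.of_nat (S m) - 1)%Z)) (ee (minus_res B chi (- Z.of_nat m - 1)%Z))).
    rewrite (Rmult_comm (ee (minus_res B chi (- Z.of_nat (S (S m)) - 1)%Z))).
    rewrite (Rplus_comm (1 / rs (minus_res B chi (- Z.of_nat (S (S m)) - 1)%Z))).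
    ring.
Qed.

Lemma sum_single {G : AbelianMonoid} (f : nat -> G) n k :
  (forall j, (1 <= j <= n)%nat -> j <> k -> f j = zero) ->
  sum_n_m f 1 n = if andb (Nat.leb 1 k) (Nat.leb k n) then f k else zero.
Proof.
  induction n; intros H.
  - rewrite sum_n_m_zero by lia. destruct (Nat.leb_spec 1 k), (Nat.leb_spec k 0); simpl; auto; lia.
  - rewrite sum_n_Sm by lia. rewrite IHn by (intros; apply H; lia).
    destruct (Nat.eq_dec k (S n)) as [E|E].
    + subst k. destruct (Nat.leb_spec (S n) n); [lia|]. rewrite Nat.leb_refl. simpl.
      rewrite plus_zero_l. auto.
    + rewrite (H (S n)) by lia. rewrite plus_zero_r.
      destruct (Nat.leb_spec 1 k), (Nat.leb_spec k n), (Nat.leb_spec k (S n)); simpl; auto; lia.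
Qed.

Lemma VC_eq arr i j : (1 <= i <= length arr)%nat -> VCmat arr i j = Vmat arr i i * Cmat arr i j.
Proof.
  intros Hi. unfold VCmat. rewrite (sum_single _ _ i).
  - destruct (Nat.leb_spec 1 i), (Nat.leb_spec i (length arr)); simpl; auto; lia.
  - intros k Hk Hne. unfold Vmat. replace (Nat.eqb i k) with false by (symmetry; apply Nat.eqb_neq; auto).
    rewrite Rmult_0_l. reflexivity.
Qed.

Lemma Cmat_zero arr i j : j <> i -> j <> S i -> i <> S j -> Cmat arr i j = 0.
Proof.
  intros h1 h2 h3. unfold Cmat.
  replace (Nat.eqb i j) with false by (symmetry; apply Nat.eqb_neq; auto).
  replace (Nat.eqb j (S i)) with false by (symmetry; apply Nat.eqb_neq; auto).
  replace (Nat.eqb i (S j)) with false by (symmetry; apply Nat.eqb_neq; auto). auto.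
Qed.

Lemma Cmat_up arr i : Cmat arr i (S i) = - (1 / rs (resF arr i)).
Proof.
  unfold Cmat. replace (Nat.eqb i (S i)) with false by (symmetry; apply Nat.eqb_neq; lia).
  rewrite Nat.eqb_refl. auto.
Qed.

Lemma Cmat_down arr i : (2 <= i)%nat -> Cmat arr i (pred i) = - (1 / rs (resF arr (pred i))).
Proof.
  intros H. unfold Cmat. replace (Nat.eqb i (pred i)) with false by (symmetry; apply Nat.eqb_neq; lia).
  replace (Nat.eqb (pred i) (S i)) with false by (symmetry; apply Nat.eqb_neq; lia).
  replace (Nat.eqb i (S (pred i))) with true by (symmetry; apply Nat.eqb_eq; lia). auto.
Qed.

Lemma Cz : (@zero C_AbelianMonoid) = RtoC 0.
Proof. reflexivity. Qed.
Lemma Cpl (a b : C) : @plus C_AbelianMonoid a b = Cplus a b.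
Proof. reflexivity. Qed.

Lemma row_eq arr (x : nat -> C) i : (1 <= i <= length arr)%nat ->
  sum_n_m (fun j => Cmult (RtoC (VCmat arr i j)) (x j)) 1 (length arr)
  = (Cplus (Cplus (if andb (Nat.leb 1 (pred i)) (Nat.leb (pred i) (length arr)) then Cmult (RtoC (VCmat arr i (pred i))) (x (pred i)) else 0%C)
               (Cmult (RtoC (VCmat arr i i)) (x i)))
         (if andb (Nat.leb 1 (S i)) (Nat.leb (S i) (length arr)) then Cmult (RtoC (VCmat arr i (S i))) (x (S i)) else 0%C)).
Proof.
  intros Hi.
  set (f := fun j => Cmult (RtoC (VCmat arr i j)) (x j)).
  set (g1 := fun j => if Nat.eqb j (pred i) then f j else zero).
  set (g2 := fun j => if Nat.eqb j i then f j else zero).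
  set (g3 := fun j => if Nat.eqb j (S i) then f j else zero).
  rewrite (sum_n_m_ext_loc f (fun j => plus (plus (g1 j) (g2 j)) (g3 j))).
  - rewrite !sum_n_m_plus.
    rewrite (sum_single g1 _ (pred i)), (sum_single g2 _ i), (sum_single g3 _ (S i));
      try (intros j _ hj; unfold g1, g2, g3; rewrite (proj2 (Nat.eqb_neq _ _) hj); auto).
    unfold g1, g2, g3. rewrite !Nat.eqb_refl.
    destruct (Nat.leb_spec 1 i), (Nat.leb_spec i (length arr)); try lia. simpl andb. reflexivity.
  - intros j Hj. unfold g1, g2, g3.
    destruct (Nat.eq_dec j i) as [E|E].
    + subst j. rewrite Nat.eqb_refl.
      replace (Nat.eqb i (pred i)) with false by (symmetry; apply Nat.eqb_neq; lia).
      replace (Nat.eqb i (S i)) with false by (symmetry; apply Nat.eqb_neq; lia).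
      rewrite ?Cz, ?Cpl. unfold plus; simpl. ring.
    + rewrite (proj2 (Nat.eqb_neq _ _) E).
      destruct (Nat.eq_dec j (pred i)) as [E1|E1].
      * rewrite (proj2 (Nat.eqb_eq _ _) E1).
        replace (Nat.eqb j (S i)) with false by (symmetry; apply Nat.eqb_neq; lia).
        rewrite ?Cz, ?Cpl. unfold plus; simpl. ring.
      * rewrite (proj2 (Nat.eqb_neq _ _) E1).
        destruct (Nat.eq_dec j (S i)) as [E2|E2].
        -- rewrite (proj2 (Nat.eqb_eq _ _) E2).
           rewrite ?Cz, ?Cpl. unfold plus; simpl. ring.
        -- rewrite (proj2 (Nat.eqb_neq _ _) E2).
           unfold f. rewrite VC_eq, Cmat_zero by lia. rewrite Rmult_0_r.
           rewrite ?Cz, ?Cpl. unfold plus; simpl. ring.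
Qed.

Lemma alg1 (d g : R) (x1 x2 z : C) : g <> 0 ->
  (0 + RtoC (d * (1 / g)) * x1 + RtoC (d * (- (1 / g))) * x2 = z * x1)%C ->
  (RtoC d * (0 + (x1 - x2) / RtoC g) = z * x1)%C.
Proof. intros hg H. rewrite <- H. assert (RtoC g <> 0%C) by (apply RtoC_nz; auto).
  cpush. rewrite RtoC_inv by auto. field. auto. Qed.

Lemma alg2 (d g1 g2 : R) (xa xb xc z : C) : g1 <> 0 -> g2 <> 0 ->
  (RtoC (d * (- (1 / g1))) * xa + RtoC (d * (1 / g1 + 1 / g2)) * xb + RtoC (d * (- (1 / g2))) * xc = z * xb)%C ->
  (RtoC d * ((xb - xa) / RtoC g1 + (xb - xc) / RtoC g2) = z * xb)%C.
Proof. intros h1 h2 H. rewrite <- H. assert (RtoC g1 <> 0%C) by (apply RtoC_nz; auto).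
  assert (RtoC g2 <> 0%C) by (apply RtoC_nz; auto).
  cpush. rewrite !RtoC_inv by auto. field. auto. Qed.

Lemma alg3 (d g : R) (xa xb z : C) : g <> 0 ->
  (RtoC (d * (- (1 / g))) * xa + RtoC (d * (1 / g)) * xb + 0 = z * xb)%C ->
  (RtoC d * ((xb - xa) / RtoC g + 0) = z * xb)%C.
Proof. intros hg H. rewrite <- H. assert (RtoC g <> 0%C) by (apply RtoC_nz; auto).
  cpush. rewrite RtoC_inv by auto. field. auto. Qed.

Lemma resF_S arr i : resF arr (S i) = nth i arr res0.
Proof. unfold resF. simpl. rewrite Nat.sub_0_r. auto. Qed.

Lemma eigen_NN (arr : list res) (x : nat -> C) (z : C) :
  (2 <= length arr)%nat ->
  (forall k, (k < length arr)%nat -> pos_res (nth k arr res0)) ->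
  (forall i, (1 <= i <= length arr)%nat ->
      sum_n_m (fun j => Cmult (RtoC (VCmat arr i j)) (x j)) 1 (length arr) = Cmult z (x i)) ->
  NN (fun k => ee (nth k arr res0)) (fun k => rs (nth k arr res0)) (length arr) (fun k => x (S k)) z.
Proof.
  intros HN Hpos Heq i Hi.
  set (N := length arr) in *.
  assert (H := Heq (S i) ltac:(lia)). rewrite row_eq in H by lia. fold N in H.
  rewrite !VC_eq in H by lia. unfold Vmat in H. rewrite Nat.eqb_refl in H.
  rewrite resF_S in H. rewrite <- ee_sq in H by (apply Hpos; lia).
  assert (gpos : forall k, (k < N)%nat -> rs (nth k arr res0) <> 0).
  { intros k hk. destruct (Hpos k hk) as [_ [_ h]]. lra. }
  unfold lft, rgt. cbv beta.
  destruct i as [|i'].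
  - simpl pred in H.
    replace (andb (Nat.leb 1 0) (Nat.leb 0 N)) with false in H by reflexivity.
    replace (andb (Nat.leb 1 2) (Nat.leb 2 N)) with true in H by (symmetry; apply Bool.andb_true_iff; split; apply Nat.leb_le; lia).
    rewrite Cmat_up in H. unfold Cmat in H; fold N in H. simpl Nat.eqb in H.
    rewrite resF_S in H.
    replace (Nat.eqb 0 (pred N)) with false by (symmetry; apply Nat.eqb_neq; lia).
    simpl Nat.eqb. cbv iota. apply alg1. apply gpos; lia. exact H.
  - simpl pred in H. 
    replace (andb (Nat.leb 1 (S i')) (Nat.leb (S i') N)) with true in H by (symmetry; apply Bool.andb_true_iff; split; apply Nat.leb_le; lia).
    rewrite Cmat_up in H. pose proof (Cmat_down arr (S (S i')) ltac:(lia)) as CD; simpl pred in CD; rewrite CD in H.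
    rewrite !resF_S in H.
    replace (Nat.eqb (S i') 0) with false by reflexivity. replace (pred (S i')) with i' by reflexivity. cbv iota.
    destruct (Nat.eq_dec (S i') (pred N)) as [E|E].
      rewrite (proj2 (Nat.eqb_eq _ _) E).
      replace (andb (Nat.leb 1 (S (S (S i')))) (Nat.leb (S (S (S i'))) N)) with false in H
        by (symmetry; apply Bool.andb_false_iff; right; apply Nat.leb_gt; lia).
      unfold Cmat in H; fold N in H. rewrite Nat.eqb_refl in H.
      replace (Nat.eqb (S (S i')) 1) with false in H by reflexivity.
      replace (Nat.eqb (S (S i')) N) with true in H by (symmetry; apply Nat.eqb_eq; lia).
      replace (N - 1)%nat with (S i') in H by lia. rewrite resF_S in H.
      apply alg3. apply gpos; lia. exact H.
    + rewrite (proj2 (Nat.eqb_neq _ _) E).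
      replace (andb (Nat.leb 1 (S (S (S i')))) (Nat.leb (S (S (S i'))) N)) with true in H
        by (symmetry; apply Bool.andb_true_iff; split; apply Nat.leb_le; lia).
      unfold Cmat in H; fold N in H. rewrite Nat.eqb_refl in H.
      replace (Nat.eqb (S (S i')) 1) with false in H by reflexivity.
      replace (Nat.eqb (S (S i')) N) with false in H by (symmetry; apply Nat.eqb_neq; lia).
      replace (S (S i') - 1)%nat with (S i') in H by lia. rewrite !resF_S in H.
      apply alg2; try (apply gpos; lia). exact H.
Qed.

Lemma NN_ext e1 g1 e2 g2 L y z :
  (forall i, (i < L)%nat -> e1 i = e2 i) -> (forall i, (S i < L)%nat -> g1 i = g2 i) ->
  NN e1 g1 L y z -> NN e2 g2 L y z.
Proof.
  intros He Hg HN i Hi. specialize (HN i Hi). rewrite <- He by auto.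
  unfold lft, rgt in *.
  destruct (Nat.eqb_spec i 0) as [E0|E0]; destruct (Nat.eqb_spec i (pred L)) as [E1|E1];
    try rewrite <- (Hg (pred i)) by lia; try rewrite <- (Hg i) by lia; auto.
Qed.

Lemma NN_rev e g L y z : (1 <= L)%nat -> NN e g L y z ->
  NN (fun i => e (L - 1 - i)%nat) (fun i => g (L - 2 - i)%nat) L (fun i => y (L - 1 - i)%nat) z.
Proof.
  intros HL HN i Hi. cbv beta. specialize (HN (L - 1 - i)%nat ltac:(lia)).
  rewrite <- HN. f_equal. rewrite Cplus_comm. unfold lft, rgt. cbv beta.
  f_equal.
  - destruct (Nat.eqb_spec (L - 1 - i) 0) as [E|E]; destruct (Nat.eqb_spec i (pred L)) as [E1|E1]; try lia; auto.
    replace (L - 1 - S i)%nat with (pred (L - 1 - i)) by lia.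
    replace (L - 2 - i)%nat with (pred (L - 1 - i)) by lia. auto.
  - destruct (Nat.eqb_spec (L - 1 - i) (pred L)) as [E|E]; destruct (Nat.eqb_spec i 0) as [E1|E1]; try lia; auto.
    replace (L - 1 - pred i)%nat with (S (L - 1 - i)) by lia.
    replace (L - 2 - pred i)%nat with (L - 1 - i)%nat by lia. auto.
Qed.

Lemma NN_zero e g L y z : (2 <= L)%nat -> (forall n, 0 < e n) -> (forall n, 0 < g n) ->
  NN e g L y z -> y 0%nat = 0%C -> forall i, (i < L)%nat -> y i = 0%C.
Proof.
  intros HL He Hg HN Hy0.
  assert (key : forall (a b : R) (u : C), a <> 0 -> b <> 0 -> (RtoC a * ((0 - u) / RtoC b))%C = 0%C -> u = 0%C).
  { intros a b u ha hb H. assert (na := RtoC_nz _ ha). assert (nb := RtoC_nz _ hb).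
    replace u with ((RtoC a * ((0 - u) / RtoC b)) * (- RtoC b / RtoC a))%C by (field; auto).
    rewrite H. ring. }
  assert (P : forall i, (S i < L)%nat -> y i = 0%C /\ y (S i) = 0%C).
  { induction i; intros Hi.
    - split; auto. specialize (HN 0%nat ltac:(lia)). unfold lft, rgt in HN.
      replace (Nat.eqb 0 (pred L)) with false in HN by (symmetry; apply Nat.eqb_neq; lia).
      rewrite Nat.eqb_refl in HN.
      cbv iota in HN. rewrite Hy0, Cmult_0_r, Cplus_0_l in HN.
      apply (key (e 0%nat ^ 2) (g 0%nat)). apply pow_nonzero, Rgt_not_eq, He. apply Rgt_not_eq, Hg. exact HN.
    - destruct (IHi ltac:(lia)) as [h1 h2]. split; auto.
      specialize (HN (S i) ltac:(lia)). unfold lft, rgt in HN.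
      replace (Nat.eqb (S i) 0) with false in HN by reflexivity.
      replace (Nat.eqb (S i) (pred L)) with false in HN by (symmetry; apply Nat.eqb_neq; lia).
      cbv iota in HN. simpl pred in HN. rewrite h1, h2, Cmult_0_r in HN.
      replace (Cdiv (Cminus (RtoC 0) (RtoC 0)) (RtoC (g i))) with (RtoC 0) in HN by (unfold Cdiv, Cminus; ring). rewrite Cplus_0_l in HN.
      apply (key (e (S i) ^ 2) (g (S i))). apply pow_nonzero, Rgt_not_eq, He. apply Rgt_not_eq, Hg. exact HN. }
  intros i Hi. destruct i. auto. apply (P i). lia.
Qed.

Lemma ee_pos q : pos_res q -> 0 < ee q.
Proof. intros [h1 [h2 h3]]. unfold ee. apply Rdiv_lt_0_compat; auto. apply sqrt_lt_R0; auto. Qed.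

Lemma mod_addL n L : (L <> 0)%nat -> ((n + L) mod L = n mod L)%nat.
Proof. intros H. replace (n + L)%nat with (n + 1 * L)%nat by lia. apply Nat.Div0.mod_add. Qed.

Theorem theorem4p7 :
  forall (D : nat) (B : nat -> list res),
    valid_blocks D B ->
    forall chiM : list nat,
      List.Forall (fun d => (1 <= d <= D)%nat) chiM ->
      forall z : C,
        eigenvalue_VC (finite_array B chiM) z ->
        Sigma D B z.
Proof.
  intros D B Hval chiM Hch z Heig.
  unfold eigenvalue_VC, finite_array in Heig.
  set (arr := flat_map B chiM) in *.
  set (L := length arr) in *.
  destruct Heig as [x [[i0 [Hi0 Hxi0]] Heq]].
  assert (Hmem : forall q, In q arr -> pos_res q).
  { intros q Hq. unfold arr in Hq. apply in_flat_map in Hq. destruct Hq as [d [Hd Hq]].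
    rewrite Forall_forall in Hch. destruct (Hval d (Hch d Hd)) as [_ Hf].
    rewrite Forall_forall in Hf. auto. }
  assert (Hpos : forall k, (k < L)%nat -> pos_res (nth k arr res0)) by (intros; apply Hmem, nth_In; auto).
  assert (HchN : chiM <> nil) by (intros E; unfold L, arr in Hi0; rewrite E in Hi0; simpl in Hi0; lia).
  assert (HL0 : L <> 0%nat) by lia.
  set (chip := fun k => nth (k mod length chiM) chiM 0%nat).
  set (chim := fun k => nth (k mod length (rev chiM)) (rev chiM) 0%nat).
  assert (HlenM : length chiM <> 0%nat) by (destruct chiM; simpl; congruence).
  assert (rp : forall n, (1 <= chip n <= D)%nat).
  { intros n. unfold chip. rewrite Forall_forall in Hch. apply Hch, nth_In, Nat.mod_upper_bound; auto. }
  assert (rm : forall n, (1 <= chim n <= D)%nat).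
  { intros n. unfold chim. rewrite Forall_forall in Hch. apply Hch. apply (proj2 (in_rev _ _)).
    apply nth_In, Nat.mod_upper_bound. rewrite length_rev; auto. }
  assert (Pform : forall n, plus_res B chip (Z.of_nat n) = nth (n mod L) arr res0).
  { intros n. unfold plus_res. rewrite Nat2Z.id. apply periodic_nth; auto.
    intros k. destruct (Hval _ (rp k)); auto. }
  assert (Mform : forall n, minus_res B chim (- Z.of_nat n - 1)%Z = nth (L - S (n mod L)) arr res0).
  { intros n. unfold minus_res. replace (Z.to_nat (- (- Z.of_nat n - 1) - 1)) with n by lia.
    rewrite (periodic_nth (fun d => rev (B d)) (rev chiM) chim).
    - rewrite flat_map_rev. rewrite length_rev. fold arr. fold L. apply rev_nth.
      apply Nat.mod_upper_bound; auto.
    - intros E. apply HchN. rewrite <- (rev_involutive chiM), E. auto.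
    - auto.
    - intros k. destruct (Hval _ (rm k)) as [h _]. intros E. apply h.
      rewrite <- (rev_involutive (B (chim k))), E. auto. }
  assert (Pposn : forall n, pos_res (plus_res B chip (Z.of_nat n))).
  { intros n. rewrite Pform. apply Hpos, Nat.mod_upper_bound; auto. }
  assert (Mposn : forall n, pos_res (minus_res B chim (- Z.of_nat n - 1)%Z)).
  { intros n. rewrite Mform. apply Hpos. assert (n mod L < L)%nat by (apply Nat.mod_upper_bound; auto). lia. }
  assert (JP := Jplus_form B chip ltac:(intros i Hi; rewrite <- (Z2Nat.id i) by lia; apply Pposn)).
  assert (JM := Jminus_form B chim ltac:(intros i Hi; replace i with (- Z.of_nat (Z.to_nat (- i - 1)) - 1)%Z by lia; apply Mposn)).
  set (ep := fun n => ee (plus_res B chip (Z.of_nat n))) in JP.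
  set (gp := fun n => rs (plus_res B chip (Z.of_nat n))) in JP.
  set (em := fun n => ee (minus_res B chim (- Z.of_nat n - 1)%Z)) in JM.
  set (gm := fun n => rs (minus_res B chim (- Z.of_nat (S n) - 1)%Z)) in JM.
  assert (ep_pos : forall n, 0 < ep n) by (intros; apply ee_pos, Pposn).
  assert (gp_pos : forall n, 0 < gp n) by (intros n; apply (Pposn n)).
  assert (em_pos : forall n, 0 < em n) by (intros; apply ee_pos, Mposn).
  assert (gm_pos : forall n, 0 < gm n) by (intros n; apply (Mposn (S n))).
  assert (ep_per : forall n, ep (n + L)%nat = ep n) by (intros; unfold ep; rewrite !Pform, mod_addL; auto).
  assert (gp_per : forall n, gp (n + L)%nat = gp n) by (intros; unfold gp; rewrite !Pform, mod_addL; auto).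
  assert (em_per : forall n, em (n + L)%nat = em n) by (intros; unfold em; rewrite !Mform, mod_addL; auto).
  assert (gm_per : forall n, gm (n + L)%nat = gm n).
  { intros; unfold gm. replace (S (n + L)) with (S n + L)%nat by lia. rewrite !Mform, mod_addL; auto. }
  assert (Hposall : forall k, pos_res (nth k arr res0)).
  { intros k. destruct (Nat.lt_ge_cases k L). auto. rewrite nth_overflow by auto.
    unfold pos_res, res0, rv, rl, rs; simpl; lra. }
  destruct (Nat.eq_dec L 1) as [HL1|HL1].
  -
    assert (i0 = 1%nat) by lia. subst i0.
    assert (H1 := Heq 1%nat ltac:(lia)). rewrite HL1, sum_n_n in H1.
    rewrite VC_eq in H1 by (fold L; lia). unfold Vmat in H1. rewrite Nat.eqb_refl in H1.
    unfold Cmat in H1. rewrite Nat.eqb_refl in H1. rewrite resF_S in H1.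
    set (a := nth 0 arr res0) in *.
    assert (Hz : z = RtoC (rv a ^ 2 / rl a * (1 / rs a))).
    { apply (f_equal (fun t => Cdiv t (x 1%nat))) in H1. unfold Cdiv in H1.
      rewrite <- !Cmult_assoc, Cinv_r in H1 by auto. rewrite !Cmult_1_r in H1. auto. }
    assert (epc : forall n, ep n = ee a) by (intros; unfold ep; rewrite Pform, HL1, Nat.mod_1_r; auto).
    assert (gpc : forall n, gp n = rs a) by (intros; unfold gp; rewrite Pform, HL1, Nat.mod_1_r; auto).
    assert (pa : pos_res a) by apply Hposall.
    assert (ga : rs a <> 0) by (destruct pa as [_ [_ h]]; lra).
    assert (nga := RtoC_nz _ ga).
    assert (la : rl a <> 0) by (destruct pa as [_ [h _]]; lra).
    assert (nla := RtoC_nz _ la).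
    set (y3 := fun k : nat => match k with 0%nat => RtoC 1 | 1%nat => RtoC 0 | _ => RtoC (- (1)) end).
    exists chip. split; auto. left.
    apply (chain ep gp 3 y3 z (Jplus B chip)); auto.
    + intros n. rewrite !epc; auto.
    + intros n. rewrite !gpc; auto.
    + intros i Hi. unfold lft, rgt. rewrite !epc, !gpc, ee_sq by auto. rewrite Hz.
      destruct i as [|[|[|i]]]; try lia; simpl; cpush; rewrite ?RtoC_inv by auto; field; auto.
    + unfold y3. apply RtoC_nz. lra.
    + unfold y3. simpl. rewrite !Cmod_R. rewrite Rabs_Ropp, Rabs_R1. lra.
  - assert (HL2 : (2 <= L)%nat) by lia.
    assert (NN0 := eigen_NN arr x z HL2 Hpos Heq).
    set (y := fun k => x (S k)) in NN0.
    assert (e0pos : forall n, 0 < ee (nth n arr res0)) by (intros; apply ee_pos, Hposall).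
    assert (g0pos : forall n, 0 < rs (nth n arr res0)) by (intros n; apply (Hposall n)).
    destruct (Rle_dec (Cmod (y (pred L))) (Cmod (y 0%nat))) as [Hle|Hgt].
    + assert (Hy0 : y 0%nat <> 0%C).
      { intros E. apply Hxi0. pose proof (NN_zero _ _ _ _ _ HL2 e0pos g0pos NN0 E (i0 - 1)%nat ltac:(lia)) as H.
        unfold y in H. replace (S (i0 - 1)) with i0 in H by lia. auto. }
      exists chip. split; auto. left.
      apply (chain ep gp L y z (Jplus B chip)); auto.
      eapply NN_ext; [ | | exact NN0].
      -- intros i Hi. unfold ep. cbv beta. rewrite Pform, Nat.mod_small; auto.
      -- intros i Hi. unfold gp. cbv beta. rewrite Pform, Nat.mod_small; auto; lia.
    + assert (HyL : y (pred L) <> 0%C).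
      { intros E. apply Hgt. rewrite E, Cmod_0. apply Cmod_ge_0. }
      assert (HL1p : (1 <= L)%nat) by lia.
      exists chim. split; auto. right.
      apply (chain em gm L (fun i => y (L - 1 - i)%nat) z (Jminus B chim)); auto.
      * eapply NN_ext; [ | | exact (NN_rev _ _ _ _ _ HL1p NN0)].
        -- intros i Hi. unfold em. cbv beta. rewrite Mform, Nat.mod_small by auto. f_equal; f_equal; lia.
        -- intros i Hi. unfold gm. cbv beta. rewrite Mform, Nat.mod_small by auto. f_equal; f_equal; lia.
      * replace (L - 1 - 0)%nat with (pred L) by lia. auto.
      * replace (L - 1 - 0)%nat with (pred L) by lia. replace (L - 1 - pred L)%nat with 0%nat by lia. lra.
Qed.
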